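(* Let $k\ge 2$ and let $U_k$ be the binary matrix whose columns are indexed by the integers $1,\dots,2^k-1$ and whose rows are indexed by those integers $r\in\{1,\dots,2^k-1\}$ that are not powers of $2$ (so $U_k$ has $2^k-1-k$ rows), where the row indexed by $r$, with $2^t<r<2^{t+1}$ for the integer $t$, has its $1$-entries exactly in the columns indexed by $r$, $r-2^t$ and $2^t$. Then $u(U_k)=\varepsilon(U_k)=2^{k-1}$.
   Context: All matrices are binary. For a nonempty set $S$ of columns of a binary matrix, let $z$ be the sum over the integers of the columns in $S$. $S$ is called $1$-free if no entry of $z$ equals $1$, and even if all entries of $z$ are even. For a binary $m\times n$ matrix $A$ with $m<n$: $\varepsilon(A)$ is the smallest cardinality of a nonempty even set of columns of $A$, and $u(A)$ is the smallest cardinality of a nonempty $1$-free set of columns of $A$. *)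

(* Defs.v *)
From mathcomp Require Import all_boot.
Set Implicit Arguments. Unset Strict Implicit. Unset Printing Implicit Defensive.

Section BinMat.
Variables (Rw Cl : finType) (A : Rw -> Cl -> bool).

Definition colsum (S : {set Cl}) (r : Rw) : nat := \sum_(c in S) (A r c : nat).

Definition one_free (S : {set Cl}) : bool := [forall r, colsum S r != 1].
Definition even_set (S : {set Cl}) : bool := [forall r, ~~ odd (colsum S r)].

(* smallest cardinality of a nonempty even / 1-free set of columns
   (default #|Cl|.+1 if there is none; never happens when #rows < #cols) *)
Definition eps : nat :=
  \big[minn/#|Cl|.+1]_(S : {set Cl} | (S != set0) && even_set S) #|S|.
Definition ufree : nat :=
  \big[minn/#|Cl|.+1]_(S : {set Cl} | (S != set0) && one_free S) #|S|.
End BinMat.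

Definition is_pow2 (r : nat) : bool := r == 2 ^ trunc_log 2 r.

Definition Ucol (k : nat) := {c : 'I_(2 ^ k) | c != 0 :> nat}.
Definition Urow (k : nat) := {r : 'I_(2 ^ k) | (r != 0 :> nat) && ~~ is_pow2 r}.

Definition U (k : nat) (r : Urow k) (c : Ucol k) : bool :=
  let rr := val (val r) in let cc := val (val c) in
  let t := trunc_log 2 rr in
  [|| cc == rr, cc == rr - 2 ^ t | cc == 2 ^ t].

(* Main.v *)
Require Import Defs.
From mathcomp Require Import all_boot zify.

Lemma key (P : nat -> bool) j :
  (forall t a, t < j.+1 -> 0 < a < 2^t -> P a + P (2^t) + P (2^t + a) != 1) ->
  (exists2 n, 0 < n < 2^j.+1 & P n) ->
  2^j <= \sum_(1 <= n < 2^j.+1) P n.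
Proof.
elim: j => [|j IH] H [n Hn Pn].
  rewrite big_nat1 expn0. move: Pn; have -> : n = 1 by lia. by move->.
set m := 2^j.+1.
have m1 : 1 <= m by rewrite expn_gt0.
have eq2 : 2^j.+2 = m + m by rewrite expnS mul2n -addnn.
rewrite eq2 (@big_cat_nat _ _ _ m) //=; last by lia.
rewrite [X in _ + X](_ : _ = \sum_(0 <= i < m) P (i + m)); last first.
  by rewrite -{1}(add0n m) big_addn addnK.
have e2 : m = (m - 1).+1 by lia.
rewrite {3}e2 big_nat_recl // add0n.
rewrite big_add1 subn1 /=.
have HH : forall a, 0 < a < m -> P a + P m + P (m + a) != 1.
  move=> a Ha; exact: H.
case Pm: (P m).
  have : \sum_(0 <= i < m.-1) 1 <= \sum_(0 <= i < m.-1) (P (i.+1) + P (i.+1 + m)).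
    rewrite [X in X <= _]big_nat [X in _ <= X]big_nat.
    apply: leq_sum => i Hi.
    have := HH i.+1. rewrite Pm (addnC m). case: (P i.+1); case: (P (i.+1 + m)) => //.
    move=> h; have hh : 0 < i.+1 < m by lia. by move: (h hh).
  rewrite big_split /= sum_nat_const_nat muln1 => h.
  have : 2^j.+1 = m by []. lia.
have eqs : \sum_(0 <= i < m.-1) P (i.+1 + m) = \sum_(0 <= i < m.-1) P (i.+1).
  apply: eq_big_nat => i Hi.
  have := HH i.+1. rewrite Pm (addnC m). case: (P i.+1); case: (P (i.+1 + m)) => //.
  move=> h; have hh : 0 < i.+1 < m by lia. by move: (h hh).
  move=> h; have hh : 0 < i.+1 < m by lia. by move: (h hh).
rewrite eqs /=.
have : 2^j <= \sum_(1 <= n < m) P n.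
  apply: IH.
    move=> t a Ht Ha; apply: H => //; lia.
  case: (ltngtP n m) => Hnm.
  - exists n => //; lia.
  - exists (n - m); first by lia.
    have := HH (n - m). rewrite Pm. have -> : m + (n - m) = n by lia.
    rewrite Pn. case: (P (n - m)) => //. move=> h. have hh : 0 < n - m < m by lia. by move: (h hh).
  - by move: Pn; rewrite Hnm Pm.
rewrite big_add1 /=.
have : 2^j.+1 = m by []. rewrite expnS; lia.
Qed.

Section K.
Variable k : nat.
Definition vc (c : Ucol k) : nat := val (val c).
Lemma vc_inj : injective vc.
Proof. by move=> x y /val_inj /val_inj. Qed.
Lemma vc_bd c : 0 < vc c < 2^k.
Proof. rewrite /vc; case: c => [[c hc] /= h]; lia. Qed.
Lemma mkc1 n (h : 0 < n < 2^k) : n < 2^k. Proof. by case/andP: h. Qed.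
Lemma mkc2 n (h : 0 < n < 2^k) : n != 0. Proof. by case/andP: h; rewrite -lt0n. Qed.
Definition mkc n (h : 0 < n < 2^k) : Ucol k :=
  exist _ (@Ordinal (2^k) n (@mkc1 n h)) (@mkc2 n h).
Lemma vc_mkc n h : vc (@mkc n h) = n. Proof. by []. Qed.

Definition PS (S : {set Ucol k}) n := [exists c in S, vc c == n].

Lemma sum_eqn (S : {set Ucol k}) n : \sum_(c in S) (vc c == n : nat) = PS S n.
Proof.
rewrite /PS; case: existsP => [[c /andP[cS /eqP cn]]|no].
  rewrite (bigD1 c) //= cn eqxx big1 // => d /andP[dS dc].
  by rewrite -cn; case: eqP => // /vc_inj e; rewrite e eqxx in dc.
rewrite big1 // => d dS; case: eqP => // e; exfalso; apply: no; exists d.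
by rewrite dS e eqxx.
Qed.

Lemma colsumE (S : {set Ucol k}) (r : Urow k) :
  let rr := val (val r) in let t := trunc_log 2 rr in
  colsum (@U k) S r = PS S rr + PS S (rr - 2^t) + PS S (2^t).
Proof.
move=> rr t.
have /andP[r0 rp] : (rr != 0) && ~~ is_pow2 rr by exact: (valP r).
have t1 : 2^t <= rr by apply: trunc_logP; lia.
have t2 : rr < 2^t.+1 by apply: trunc_log_ltn.
have t3 : rr != 2^t by [].
rewrite /colsum -!sum_eqn -!big_split /=.
apply: eq_bigr => c _; rewrite /U -/rr -/t.
have e2 : 2^t.+1 = 2^t + 2^t by rewrite expnS mul2n addnn.
have t4 : 0 < 2^t by rewrite expn_gt0.
have t5 : rr <> 2^t by apply/eqP.
rewrite /vc /=; move: (nat_of_ord (sval c)) => x; do 3 case: eqP => ? //=; lia.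
Qed.

Lemma cardE (S : {set Ucol k}) : #|S| = \sum_(1 <= n < 2^k) PS S n.
Proof.
under eq_bigr do rewrite -sum_eqn.
rewrite exchange_big /= -sum1_card; apply: eq_bigr => c _.
have hc := vc_bd c.
rewrite (@big_cat_nat _ _ _ (vc c)) /=; try lia.
rewrite [X in _ = _ + X]big_ltn; last by lia.
rewrite eqxx !big1_seq //= => i; rewrite mem_index_iota => h;
  apply/eqP; rewrite eqb0; apply/eqP; lia.
Qed.

Lemma mkr1 t a : t < k -> 0 < a < 2^t -> 2^t + a < 2^k.
Proof.
move=> tk ha; have : 2^t.+1 <= 2^k by apply: leq_pexp2l.
rewrite expnS; lia.
Qed.
Lemma mkr2 t a : 0 < a < 2^t -> (2^t + a != 0) && ~~ is_pow2 (2^t + a).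
Proof.
move=> ha; have e : trunc_log 2 (2^t + a) = t.
  apply: trunc_log_eq => //; rewrite expnS; apply/andP; split; lia.
rewrite /is_pow2 e; apply/andP; split; apply/negP => /eqP; lia.
Qed.
Definition mkr t a (tk : t < k) (ha : 0 < a < 2^t) : Urow k :=
  exist _ (@Ordinal (2^k) (2^t + a) (@mkr1 t a tk ha)) (@mkr2 t a ha).

Lemma lower (S : {set Ucol k}) : 0 < k -> S != set0 -> one_free (@U k) S ->
  2^k.-1 <= #|S|.
Proof.
move=> k0 /set0Pn [c cS] /forallP hf.
rewrite cardE; have := @key (PS S) k.-1; rewrite prednK //; apply.
  move=> t a tk ha; have := hf (@mkr t a tk ha); rewrite colsumE /=.
  have e : trunc_log 2 (2^t + a) = t.
    apply: trunc_log_eq => //; rewrite expnS; apply/andP; split; lia.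
  rewrite e addKn => h; apply/eqP => h2; move/eqP: h; apply; lia.
exists (vc c); first exact: vc_bd.
by apply/existsP; exists c; rewrite cS eqxx.
Qed.

Definition E : {set Ucol k} := [set c | 2^k.-1 <= vc c].

Lemma PSE n : 0 < n < 2^k -> PS E n = (2^k.-1 <= n).
Proof.
move=> h; apply/existsP/idP => [[c /andP[]]|hn].
  by rewrite inE => h1 /eqP <-.
by exists (@mkc n h); rewrite inE vc_mkc hn eqxx.
Qed.

Lemma cardEE : 0 < k -> #|E| = 2^k.-1.
Proof.
move=> k0; rewrite cardE.
have e : 2^k = 2^k.-1 + 2^k.-1 by rewrite addnn -mul2n -expnS prednK.
rewrite (eq_big_nat _ _ (F2 := fun n => (2^k.-1 <= n) : nat)); last first.
  by move=> i hi; rewrite PSE.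
have h1 : 0 < 2^k.-1 by rewrite expn_gt0.
rewrite (@big_cat_nat _ _ _ (2^k.-1)) /=; try lia.
rewrite big1_seq; last by move=> i; rewrite mem_index_iota => hi; apply/eqP; rewrite eqb0 -ltnNge; lia.
rewrite (eq_big_nat _ _ (F2 := fun n => 1)); last by move=> i hi; have -> : 2^k.-1 <= i by lia.
rewrite sum_nat_const_nat; lia.
Qed.

Lemma evenE : 0 < k -> even_set (@U k) E.
Proof.
move=> k0; apply/forallP => r; rewrite colsumE /=.
set rr := val (val r); set t := trunc_log 2 rr.
have /andP[r0 rp] : (rr != 0) && ~~ is_pow2 rr by exact: (valP r).
have t1 : 2^t <= rr by apply: trunc_logP; lia.
have t2 : rr < 2^t.+1 by apply: trunc_log_ltn.
have t5 : rr <> 2^t by apply/eqP.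
have rk : rr < 2^k by exact: ltn_ord.
have tk : t < k.
  rewrite ltnNge; apply/negP => h; have := leq_pexp2l (isT : 0 < 2) h; lia.
have t4 : 0 < 2^t by rewrite expn_gt0.
rewrite !PSE; try (apply/andP; split; lia).
rewrite expnS in t2.
case: (ltnP t k.-1) => htk.
  have : 2^t.+1 <= 2^k.-1 by apply: leq_pexp2l.
  rewrite expnS => hh.
  have -> : (2^k.-1 <= rr) = false by apply/negP; lia.
  have -> : (2^k.-1 <= rr - 2^t) = false by apply/negP; lia.
  by have -> : (2^k.-1 <= 2^t) = false by apply/negP; lia.
have et : t = k.-1 by lia.
rewrite -et.
have -> : (2^t <= rr) = true by apply/idP; lia.
have -> : (2^t <= rr - 2^t) = false by apply/negP; lia.
by rewrite leqnn.
Qed.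

End K.

Lemma bigmin_geq (T : finType) (P : pred T) (F : T -> nat) x m :
  m <= x -> (forall i, P i -> m <= F i) -> m <= \big[minn/x]_(i | P i) F i.
Proof.
move=> hx hF; apply: (big_ind (fun v => m <= v) hx _ hF) => a b ha hb; by rewrite leq_min ha hb.
Qed.

Lemma bigmin_leq (T : finType) (P : pred T) (F : T -> nat) x i0 :
  P i0 -> \big[minn/x]_(i | P i) F i <= F i0.
Proof.
move=> h; have : i0 \in index_enum T by rewrite mem_index_enum.
elim: (index_enum T) => // a r IH; rewrite inE big_cons => /orP[/eqP <-|hr].
  by rewrite h geq_minl.
case: (P a); last exact: IH.
by rewrite geq_min (IH hr) orbT.
Qed.

Theorem mainTheorem5 (k : nat) (hk : 2 <= k) :
  ufree (@U k) = 2 ^ k.-1 /\ eps (@U k) = 2 ^ k.-1.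
Proof.
have k0 : 0 < k by lia.
have hEv := @evenE k k0.
have hE0 : E k != set0.
  have h : 0 < 2^k.-1 < 2^k.
    apply/andP; split; first by rewrite expn_gt0.
    by rewrite ltn_exp2l // prednK.
  by apply/set0Pn; exists (@mkc k _ h); rewrite inE vc_mkc.
have ev1 : forall S, even_set (@U k) S -> one_free (@U k) S.
  move=> S /forallP h; apply/forallP => r; have := h r.
  by case: (colsum _ _ _) => [|[|]].
have hx : 2^k.-1 <= #|{: Ucol k}|.+1 by rewrite -(@cardEE k k0) ltnW // ltnS max_card.
split; apply/eqP; rewrite eqn_leq; apply/andP; split.
- rewrite -(@cardEE k k0); apply: bigmin_leq; rewrite hE0 /=; exact: ev1.
- apply: bigmin_geq => // S /andP[h1 h2]; exact: lower.
- rewrite -(@cardEE k k0); apply: bigmin_leq; by rewrite hE0.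
- apply: bigmin_geq => // S /andP[h1 h2]; apply: lower => //; exact: ev1.
Qed.
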